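(* Let $G$ and $H$ be two nontrivial connected graphs. Then $$\max\{hn_{cc}(G),hn_{cc}(H),3\}\leq hn_{cc}(G\Box H)\leq hn_{cc}(G)+hn_{cc}(H)-1.$$
   Context: All graphs are finite, simple and undirected. For a graph $G$ and $S\subseteq V(G)$, the cycle interval $\langle S\rangle$ consists of the vertices of $S$ together with every vertex $w\in V(G)\setminus S$ such that $G[S\cup\{w\}]$ contains a cycle through $w$; $S$ is cycle convex if $\langle S\rangle=S$; the cycle convex hull $\langle S\rangle_C$ is the smallest cycle convex set containing $S$; a hull set is a set $S$ with $\langle S\rangle_C=V(G)$, and $hn_{cc}(G)$ is the minimum cardinality of a hull set. The Cartesian product $G\Box H$ has vertex set $V(G)\times V(H)$, with $(g_1,h_1)\sim(g_2,h_2)$ iff ($g_1\sim g_2$ and $h_1=h_2$) or ($g_1=g_2$ and $h_1\sim h_2$). A graph is nontrivial if it has at least two vertices. *)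

(* Defs.v *)
From mathcomp Require Import all_boot.
Set Implicit Arguments. Unset Strict Implicit. Unset Printing Implicit Defensive.

Section CycleConvexity.
Variable T : finType.
Implicit Types (e : rel T) (S X : {set T}) (w : T).

Definition simple_graph e := symmetric e /\ irreflexive e.
Definition graph_connected e := forall x y : T, connect e x y.
Definition nontrivial := 1 < #|T|.

(* G[X] contains a cycle through w: a sequence of pairwise distinct vertices
   of X, of length >= 3, consecutive (cyclically) adjacent, containing w.
   Such a cycle has length <= #|T|, so we quantify over bounded tuples. *)
Definition cycle_through e X w : bool :=
  [exists n : 'I_#|T|.+1, exists t : n.-tuple T,
     [&& 3 <= n, uniq t, cycle e t, w \in t & all (fun x => x \in X) t]].

Definition cc_interval e S : {set T} :=
  S :|: [set w | (w \notin S) && cycle_through e (w |: S) w].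

Definition cc_convex e S : bool := cc_interval e S == S.

Definition cc_hull e S : {set T} :=
  \bigcap_(C : {set T} | cc_convex e C && (S \subset C)) C.

Definition hull_set e S : bool := cc_hull e S == [set: T].

(* hn_cc: minimum cardinality of a hull set ([set: T] is always one) *)
Definition hn_cc e : nat :=
  \big[minn/#|T|]_(S : {set T} | hull_set e S) #|S|.

End CycleConvexity.

Definition box_rel (T1 T2 : finType) (e1 : rel T1) (e2 : rel T2) : rel (T1 * T2) :=
  fun u v => (e1 u.1 v.1 && (u.2 == v.2)) || ((u.1 == v.1) && e2 u.2 v.2).

(* Main.v *)
Require Import Defs.
From mathcomp Require Import all_boot zify.

Module Aux.
Set Implicit Arguments. Unset Strict Implicit. Unset Printing Implicit Defensive.

Section Gen.
Variable T : finType.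
Implicit Types (e : rel T) (S X C : {set T}) (w : T).

Definition rrel e X : rel T := fun x y => [&& x \in X, y \in X & e x y].

Definition cl e X w := exists u v, [/\ u != v, e w u && e w v, u \in X, v \in X & connect (rrel e X) u v].

Lemma ctP e X w : cycle_through e X w <-> exists s : seq T,
  [&& 3 <= size s, uniq s, cycle e s, w \in s & all (fun x => x \in X) s].
Proof.
split.
  by case/existsP=> n /existsP[t H]; exists (tval t); rewrite size_tuple.
case=> s /and5P[s3 us cs ws as_]; apply/existsP.
have hs : size s < #|T|.+1 by rewrite ltnS -(card_uniqP us) max_card.
exists (Ordinal hs); apply/existsP; exists (in_tuple s).
by rewrite /= s3 us cs ws as_.
Qed.

Lemma path_rrel e X x p : path (rrel e X) x p -> all (fun y => y \in X) p.
Proof.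
by elim: p x => [|y p IH] x //= /andP[/and3P[_ -> _] /IH].
Qed.

Lemma clA e X w : symmetric e -> w \notin X -> cycle_through e (w |: X) w -> cl e X w.
Proof.
move=> sym wX /ctP[s /and5P[s3 us cs ws as_]].
case: (rot_to ws) => i s' Hrot.
have us' : uniq (w :: s') by rewrite -Hrot rot_uniq.
have cs' : cycle e (w :: s') by rewrite -Hrot rot_cycle.
have as' : all (fun x => x \in w |: X) (w :: s').
  by apply/allP=> x; rewrite -Hrot mem_rot => /(allP as_).
have sz : 3 <= size (w :: s') by rewrite -Hrot size_rot.
clear Hrot; case: s' us' cs' as' sz => [|u q] //.
case: q => [|u2 q] // us' cs' as' _.
set q' := u2 :: q in us' cs' as'.
have inX : forall x, x \in u :: q' -> x \in X.
  move=> x xin; move: us' => /= /andP[wn _].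
  have := allP as' x; rewrite inE xin orbT => /(_ isT).
  by rewrite in_setU1 => /orP[/eqP xw|//]; move: wn; rewrite -xw xin.
have /andP[ewu] : e w u && path e u (rcons q' w) by exact: cs'.
rewrite rcons_path => /andP[pq elw].
exists u, (last u q'); split.
- move: us' => /= /and3P[_ uq _]; apply/negP=> /eqP eu.
  by move: uq; rewrite eu /q' (mem_last u2 q).
- by rewrite ewu sym.
- by apply: inX; rewrite mem_head.
- by apply: inX; rewrite mem_last.
- apply/connectP; exists q' => //.
  apply: (@sub_in_path _ (fun x => x \in X) e); last exact: pq.
    by move=> x y xX yX exy; apply/and3P.
  by apply/allP.
Qed.

Lemma clB e X w : symmetric e -> w \notin X -> cl e X w -> cycle_through e (w |: X) w.
Proof.
move=> sym wX [u [v [uv /andP[ewu ewv] uX vX /connectP[p pp lp]]]].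
case: (shortenP pp) => p' pp' up' _ in lp.
apply/ctP; exists [:: w, u & p'].
have allp' := path_rrel pp'.
have wp : w \notin u :: p'.
  apply/negP=> /= ; rewrite inE => /orP[/eqP wu|wp]; first by move: wX; rewrite wu uX.
  by move: wX; rewrite (allP allp' _ wp).
case: p' pp' up' lp allp' wp => [|x p'] pp' up' lp allp' wp.
  by move: uv; rewrite lp eqxx.
apply/and5P; split.
- by [].
- by rewrite cons_uniq wp up'.
- rewrite /= rcons_path ewu /=.
  have /andP[H1 H2] : path e u (x :: p') by apply: sub_path pp' => a b /and3P[].
  apply/and3P; split=> //.
  by rewrite /= -[last x p']/(last u (x :: p')) -lp sym ewv.
- by rewrite mem_head.
- apply/allP=> y; rewrite !inE => /orP[/eqP->|/orP[/eqP->|yp]]; rewrite ?eqxx //.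
  + by rewrite uX orbT.
  + by rewrite (allP allp' y) ?orbT // inE yp.
Qed.

Lemma cl_mono e X (Y : {set T}) w : X \subset Y -> cl e X w -> cl e Y w.
Proof.
move=> sXY [u [v [uv ew uX vX c]]]; exists u, v; split=> //.
- exact: (subsetP sXY).
- exact: (subsetP sXY).
apply: connect_sub c => x y /and3P[xX yX exy]; apply: connect1.
by rewrite /rrel (subsetP sXY _ xX) (subsetP sXY _ yX).
Qed.

Lemma convex_intro e C : (forall w, w \notin C -> ~ cl e C w) -> symmetric e -> cc_convex e C.
Proof.
move=> H sym; rewrite /cc_convex /cc_interval; apply/eqP/setUidPl.
apply/subsetP=> w; rewrite inE => /andP[wC ct].
by case: (H w wC (clA sym wC ct)).
Qed.

Lemma convex_elim e C w : symmetric e -> cc_convex e C -> w \notin C -> cl e C w -> False.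
Proof.
move=> sym cv wC c; have ct := clB sym wC c.
have : w \in cc_interval e C by rewrite /cc_interval in_setU inE wC ct orbT.
by rewrite (eqP cv) (negbTE wC).
Qed.

Lemma hull_sub e S : S \subset cc_hull e S.
Proof. by apply/subsetP=> x xS; apply/bigcapP=> C /andP[_ /subsetP]; apply. Qed.

Lemma hull_closure e S w : symmetric e -> cl e (cc_hull e S) w -> w \in cc_hull e S.
Proof.
move=> sym c; apply/bigcapP=> C /andP[cv sC].
case wC: (w \in C) => //.
have sub : cc_hull e S \subset C by apply: (bigcap_inf C); rewrite cv sC.
by case: (convex_elim sym cv (negbT wC) (cl_mono sub c)).
Qed.

Lemma hull_set_intro e S : (forall C, cc_convex e C -> S \subset C -> C = setT) -> hull_set e S.
Proof.
move=> H; apply/eqP/setP=> x; rewrite inE; apply/bigcapP=> C /andP[cv sC].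
by rewrite (H C cv sC) inE.
Qed.

Lemma hull_set_elim e S C : hull_set e S -> cc_convex e C -> S \subset C -> C = setT.
Proof.
move=> hS cv sC; apply/eqP; rewrite eqEsubset subsetT /= -(eqP hS).
by apply: (bigcap_inf C); rewrite cv sC.
Qed.

Lemma hull_setT e : hull_set e setT.
Proof. by apply: hull_set_intro=> C _; rewrite subTset => /eqP. Qed.

Lemma hn_le e S : hull_set e S -> hn_cc e <= #|S|.
Proof.
move=> hS; rewrite /hn_cc.
have : S \in index_enum {set T} by rewrite mem_index_enum.
elim: (index_enum _) => [|a r IH] //; rewrite in_cons big_cons.
case/orP=> [/eqP <-|/IH h]; first by rewrite hS geq_minl.
by case: ifP => // _; rewrite geq_min h orbT.
Qed.

Lemma hn_ex e : exists S, hull_set e S /\ #|S| = hn_cc e.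
Proof.
rewrite /hn_cc; apply: (big_ind (fun x => exists S, hull_set e S /\ #|S| = x)).
- by exists setT; rewrite hull_setT cardsT.
- move=> x y [S [hS <-]] [S' [hS' <-]].
  by case: (leqP #|S| #|S'|) => h; [exists S; split=> //; apply/esym/minn_idPl | exists S'; split=> //; apply/esym/minn_idPr/ltnW].
- by move=> S hS; exists S.
Qed.

Lemma convex0 e : symmetric e -> cc_convex e set0.
Proof.
move=> sym; apply: convex_intro => // w _ [u [v [_ _ ]]]; by rewrite inE.
Qed.

Lemma hull_set_n0 e S : symmetric e -> 0 < #|T| -> hull_set e S -> S != set0.
Proof.
move=> sym nT hS; apply/negP=> /eqP S0.
have := hull_set_elim hS (convex0 sym); rewrite S0 sub0set => /(_ isT) /setP.
case/card_gt0P: nT => x _ /(_ x); by rewrite !inE.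
Qed.

Lemma connect_ind e (P : T -> Prop) x y : connect e x y -> P x ->
  (forall a b, e a b -> P a -> P b) -> P y.
Proof.
move=> /connectP[p pp ->] Px H.
elim: p x pp Px => [|z p IH] x //= /andP[exz pp] Px.
by apply: IH pp (H _ _ exz Px).
Qed.

End Gen.

Section Prod.
Variables (T1 T2 : finType) (e1 : rel T1) (e2 : rel T2).
Hypotheses (s1 : symmetric e1) (i1 : irreflexive e1) (s2 : symmetric e2) (i2 : irreflexive e2).
Hypotheses (n1 : 1 < #|T1|) (n2 : 1 < #|T2|).
Let B := box_rel e1 e2.

Lemma box_sym : symmetric B.
Proof. by move=> [a b] [c d]; rewrite /B /box_rel /= s1 s2 (eq_sym a) (eq_sym b). Qed.

Lemma box_irr : irreflexive B.
Proof. by move=> [a b]; rewrite /B /box_rel /= i1 i2 !andbF. Qed.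

Lemma some1 : exists g : T1, true.
Proof. by case/card_gt0P: (ltnW n1) => x _; exists x. Qed.
Lemma some2 : exists h : T2, true.
Proof. by case/card_gt0P: (ltnW n2) => x _; exists x. Qed.

Lemma lower1 S : hull_set B S -> hull_set e1 [set x.1 | x in S].
Proof.
move=> hS; apply: hull_set_intro => C cv sC.
pose D := [set x : T1 * T2 | x.1 \in C].
have nb : forall w u, w.1 \notin C -> u.1 \in C -> B w u -> e1 w.1 u.1 && (w.2 == u.2).
  move=> w u wC uC; rewrite /B /box_rel => /orP[//|/andP[/eqP h _]].
  by move: wC; rewrite h uC.
have cvD : cc_convex B D.
  apply: convex_intro box_sym => w wD [u [v [uv /andP[ewu ewv] uD vD c]]].
  rewrite !inE in wD uD vD.
  apply: (convex_elim s1 cv wD); exists u.1, v.1; split=> //.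
  - case/andP: (nb _ _ wD uD ewu) => _ /eqP hu.
    case/andP: (nb _ _ wD vD ewv) => _ /eqP hv.
    apply: contra uv => /eqP h; apply/eqP.
    by rewrite [u]surjective_pairing [v]surjective_pairing h -hu -hv.
  - by case/andP: (nb _ _ wD uD ewu) => -> _; case/andP: (nb _ _ wD vD ewv) => -> _.
  - apply: (connect_ind (P := fun y : T1 * T2 => connect (rrel e1 C) u.1 y.1) c) => //.
    move=> a b /and3P[aD bD eab] ca; rewrite !inE in aD bD.
    move: eab; rewrite /B /box_rel => /orP[/andP[eab _]|/andP[/eqP <- _]] //.
    by apply: connect_trans ca (connect1 _); apply/and3P.
have SD : S \subset D.
  by apply/subsetP=> x xS; rewrite inE (subsetP sC) //; apply/imsetP; exists x.
have DT := hull_set_elim hS cvD SD.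
apply/setP=> g; rewrite inE; case: some2 => h _.
have : (g, h) \in D by rewrite DT inE.
all: by rewrite inE.
Qed.

Lemma lower2 S : hull_set B S -> hull_set e2 [set x.2 | x in S].
Proof.
move=> hS; apply: hull_set_intro => C cv sC.
pose D := [set x : T1 * T2 | x.2 \in C].
have nb : forall w u, w.2 \notin C -> u.2 \in C -> B w u -> (w.1 == u.1) && e2 w.2 u.2.
  move=> w u wC uC; rewrite /B /box_rel => /orP[/andP[_ /eqP h]|//].
  by move: wC; rewrite h uC.
have cvD : cc_convex B D.
  apply: convex_intro box_sym => w wD [u [v [uv /andP[ewu ewv] uD vD c]]].
  rewrite !inE in wD uD vD.
  apply: (convex_elim s2 cv wD); exists u.2, v.2; split=> //.
  - case/andP: (nb _ _ wD uD ewu) => /eqP hu _.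
    case/andP: (nb _ _ wD vD ewv) => /eqP hv _.
    apply: contra uv => /eqP h; apply/eqP.
    by rewrite [u]surjective_pairing [v]surjective_pairing h -hu -hv.
  - by case/andP: (nb _ _ wD uD ewu) => _ ->; case/andP: (nb _ _ wD vD ewv) => _ ->.
  - apply: (connect_ind (P := fun y : T1 * T2 => connect (rrel e2 C) u.2 y.2) c) => //.
    move=> a b /and3P[aD bD eab] ca; rewrite !inE in aD bD.
    move: eab; rewrite /B /box_rel => /orP[/andP[_ /eqP <-]|/andP[_ eab]] //.
    by apply: connect_trans ca (connect1 _); apply/and3P.
have SD : S \subset D.
  by apply/subsetP=> x xS; rewrite inE (subsetP sC) //; apply/imsetP; exists x.
have DT := hull_set_elim hS cvD SD.
apply/setP=> g; rewrite inE; case: some1 => h _.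
have : (h, g) \in D by rewrite DT inE.
all: by rewrite inE.
Qed.

Lemma fiber2_convex h : cc_convex B [set x | x.2 == h].
Proof.
apply: convex_intro box_sym => w wF [u [v [uv /andP[ewu ewv] uF vF _]]].
rewrite !inE in wF uF vF.
have key : forall z, z.2 == h -> B w z -> z = (w.1, h).
  move=> [a b] /= /eqP -> ; rewrite /B /box_rel /= => /orP[/andP[_ /eqP hh]|/andP[/eqP <- _]] //.
  by move: wF; rewrite hh eqxx.
by move: uv; rewrite (key _ uF ewu) (key _ vF ewv) eqxx.
Qed.

Lemma fiber1_convex g : cc_convex B [set x | x.1 == g].
Proof.
apply: convex_intro box_sym => w wF [u [v [uv /andP[ewu ewv] uF vF _]]].
rewrite !inE in wF uF vF.
have key : forall z, z.1 == g -> B w z -> z = (g, w.2).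
  move=> [a b] /= /eqP -> ; rewrite /B /box_rel /= => /orP[/andP[_ /eqP <-]|/andP[/eqP hh _]] //.
  by move: wF; rewrite hh eqxx.
by move: uv; rewrite (key _ uF ewu) (key _ vF ewv) eqxx.
Qed.

Lemma ge3 S : hull_set B S -> 3 <= #|S|.
Proof.
move=> hS; rewrite leqNgt; apply/negP=> small.
have noF2 : forall h, ~ S \subset [set x | x.2 == h].
  move=> h sF; have := hull_set_elim hS (fiber2_convex h) sF => /setP FT.
  case/card_gt1P: n2 => a [b [_ _ ab]]; case: some1 => g _.
  have := FT (g, a); have := FT (g, b); rewrite !inE /= => /eqP <- /eqP ea.
  by move: ab; rewrite ea eqxx.
have noF1 : forall g, ~ S \subset [set x | x.1 == g].
  move=> h sF; have := hull_set_elim hS (fiber1_convex h) sF => /setP FT.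
  case/card_gt1P: n1 => a [b [_ _ ab]]; case: some2 => g _.
  have := FT (a, g); have := FT (b, g); rewrite !inE /= => /eqP <- /eqP ea.
  by move: ab; rewrite ea eqxx.
move: small; rewrite ltnS leq_eqVlt ltnS leq_eqVlt ltnS leqn0 => /or3P[/cards2P|/cards1P|/eqP/cards0_eq].
- move=> [a [b [ab SE]]].
  case a2: (a.2 == b.2).
    by apply: (noF2 a.2); rewrite SE; apply/subsetP=> x; rewrite !inE => /orP[]/eqP->; rewrite // eq_sym.
  case a1: (a.1 == b.1).
    by apply: (noF1 a.1); rewrite SE; apply/subsetP=> x; rewrite !inE => /orP[]/eqP->; rewrite // eq_sym.
  have nr : forall x y, ~~ rrel B S x y.
    move=> x y; apply/negP => /and3P[]; rewrite SE !inE.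
    move=> /orP[]/eqP-> /orP[]/eqP->; rewrite ?box_irr // /B /box_rel.
      by rewrite a1 a2 !andbF.
    by rewrite (eq_sym b.1) a1 (eq_sym b.2) a2 !andbF.
  have cvS : cc_convex B S.
    apply: convex_intro box_sym => w _ [u [v [uv _ _ _ /connectP[p pp lp]]]].
    case: p pp lp => [|z p] /=; first by move=> _ vu; move: uv; rewrite vu eqxx.
    by rewrite (negbTE (nr u z)).
  have := hull_set_elim hS cvS (subxx S) => /setP ST.
  have : #|S| = 2 by rewrite SE cards2 ab.
  have -> : S = setT by apply/setP.
  rewrite cardsT card_prod => h; move: n1 n2; rewrite -h; lia.
- move=> [a SE]; apply: (noF2 a.2); rewrite SE sub1set inE eqxx //.
- move=> SE; case: some2 => h _; apply: (noF2 h); rewrite SE sub0set //.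
Qed.

Hypotheses (c1 : graph_connected e1) (c2 : graph_connected e2).

Lemma upper S1 S2 : hull_set e1 S1 -> hull_set e2 S2 ->
  hn_cc B <= #|S1| + #|S2| - 1.
Proof.
move=> h1 h2.
case/set0Pn: (hull_set_n0 s1 (ltnW n1) h1) => g0 g0S.
case/set0Pn: (hull_set_n0 s2 (ltnW n2) h2) => h0 h0S.
pose P := [set (g, h0) | g in S1] :|: [set (g0, h) | h in S2].
pose K := cc_hull B P.
have PK := subsetP (hull_sub B P).
have stepA : forall g, (g, h0) \in K.
  pose C := [set g | (g, h0) \in K].
  have cv : cc_convex e1 C.
    apply: convex_intro s1 => g gC [u [v [uv /andP[egu egv] uC vC c]]].
    move/negP: gC; apply; rewrite inE; apply: hull_closure box_sym _.
    rewrite !inE in uC vC.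
    exists (u, h0), (v, h0); split=> //.
    - by apply: contra uv => /eqP[->].
    - by rewrite /B /box_rel /= egu egv eqxx.
    - apply: (connect_ind (P := fun y => connect (rrel B K) (u, h0) (y, h0)) c) => //.
      move=> a b /and3P[aC bC eab] ca; rewrite !inE in aC bC.
      apply: connect_trans ca (connect1 _); apply/and3P; split=> //.
      by rewrite /B /box_rel /= eab eqxx.
  have sC : S1 \subset C.
    by apply/subsetP=> x xS; rewrite inE PK // inE; apply/orP; left; apply/imsetP; exists x.
  by move=> g; have := hull_set_elim h1 cv sC => /setP /(_ g); rewrite !inE.
have stepB : forall h, (g0, h) \in K.
  pose C := [set h | (g0, h) \in K].
  have cv : cc_convex e2 C.
    apply: convex_intro s2 => g gC [u [v [uv /andP[egu egv] uC vC c]]].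
    move/negP: gC; apply; rewrite inE; apply: hull_closure box_sym _.
    rewrite !inE in uC vC.
    exists (g0, u), (g0, v); split=> //.
    - by apply: contra uv => /eqP[->].
    - by rewrite /B /box_rel /= egu egv eqxx !orbT.
    - apply: (connect_ind (P := fun y => connect (rrel B K) (g0, u) (g0, y)) c) => //.
      move=> a b /and3P[aC bC eab] ca; rewrite !inE in aC bC.
      apply: connect_trans ca (connect1 _); apply/and3P; split=> //.
      by rewrite /B /box_rel /= eab eqxx orbT.
  have sC : S2 \subset C.
    by apply/subsetP=> x xS; rewrite inE PK // inE; apply/orP; right; apply/imsetP; exists x.
  by move=> g; have := hull_set_elim h2 cv sC => /setP /(_ g); rewrite !inE.
have stepC : forall h g, (g, h) \in K.
  move=> h; apply: (connect_ind (P := fun h => forall g, (g, h) \in K) (c2 h0 h)) => //.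
  move=> a b eab Pa g.
  apply: (connect_ind (P := fun g => (g, b) \in K) (c1 g0 g)) => // c d ecd cb.
  apply: hull_closure box_sym _.
  exists (c, b), (d, a); split=> //.
  - apply/eqP=> [[cd _]]; by move: ecd; rewrite cd i1.
  - by rewrite /B /box_rel /= s1 ecd s2 eab !eqxx orbT.
  - apply: (connect_trans (y := (c, a))); apply: connect1; apply/and3P; split=> //.
      by rewrite /B /box_rel /= s2 eab eqxx orbT.
    by rewrite /B /box_rel /= ecd eqxx.
have hP : hull_set B P.
  by apply/eqP/setP=> [[g h]]; rewrite inE stepC.
apply: (leq_trans (hn_le hP)).
rewrite cardsU.
have I1 : 1 <= #|[set (g, h0) | g in S1] :&: [set (g0, h) | h in S2]|.
  apply/card_gt0P; exists (g0, h0); rewrite inE; apply/andP; split; apply/imsetP.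
    by exists g0.
  by exists h0.
have L1 := leq_imset_card (fun g => (g, h0)) S1.
have L2 := leq_imset_card (fun h => (g0, h)) S2.
lia.
Qed.

Lemma main_sec : maxn (maxn (hn_cc e1) (hn_cc e2)) 3 <= hn_cc B /\
  hn_cc B <= hn_cc e1 + hn_cc e2 - 1.
Proof.
case: (hn_ex B) => S [hS cS]; split.
- rewrite !geq_max -cS ge3 // andbT.
  apply/andP; split.
    exact: leq_trans (hn_le (lower1 hS)) (leq_imset_card _ _).
  exact: leq_trans (hn_le (lower2 hS)) (leq_imset_card _ _).
- case: (hn_ex e1) => S1 [h1 <-]; case: (hn_ex e2) => S2 [h2 <-]; exact: upper.
Qed.

End Prod.

End Aux.

Theorem mainTheorem7 (T1 T2 : finType) (e1 : rel T1) (e2 : rel T2) :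
  simple_graph e1 -> simple_graph e2 ->
  nontrivial T1 -> nontrivial T2 ->
  graph_connected e1 -> graph_connected e2 ->
  maxn (maxn (hn_cc e1) (hn_cc e2)) 3 <= hn_cc (box_rel e1 e2) /\
  hn_cc (box_rel e1 e2) <= hn_cc e1 + hn_cc e2 - 1.
Proof.
move=> [s1 i1] [s2 i2] n1 n2 c1 c2.
exact: (@Aux.main_sec T1 T2 e1 e2 s1 i1 s2 i2 n1 n2 c1 c2).
Qed.
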